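(* Let $H(c)$ and $p(c)$ (for $c>0$) be the limits $H(c)=\lim_{N\to\infty}N^{-1}H(\mathbb{G}(N,\lfloor cN\rfloor))$ (in probability) and $p(c)=\lim_{N\to\infty}N^{-1}\log p(N,\lfloor cN\rfloor)$. For each of the Coloring, K-SAT and NAE-K-SAT models there exists a critical value $c^*_H$ such that $H(c)=c$ for $c<c^*_H$ and $H(c)<c$ for $c>c^*_H$. Similarly, there exists $c^*_p$ such that $p(c)=0$ for $c<c^*_p$ and $p(c)<0$ for $c>c^*_p$.
   Context: $[N]=\{1,\dots,N\}$; $\chi=\{0,\dots,q-1\}$. $\mathbb{G}(N,M)$ is the random hypergraph on $[N]$ with $M$ directed $K$-hyperedges chosen independently and uniformly at random from $[N]^K$. For a hypergraph $G=([N],E)$ with edge potentials $H_e$, $H(x)=\sum_{e\in E}H_e(x_e)$ for $x\in\chi^N$ (node potentials are zero in these models) and $H(G)=\max_x H(x)$. Models: $q$-Coloring ($K=2$, $H_e(x,y)=1$ if $x\ne y$, $0$ if $x=y$); K-SAT ($q=2$; for each hyperedge independently $a_e$ uniform in $\{0,1\}^K$, $H_e(a_e)=0$, $H_e=1$ otherwise); NAE-K-SAT ($q=2$; $H_e(a_e)=H_e(\mathbf 1-a_e)=0$, $H_e=1$ otherwise). $p(N,M)=\mathbb{P}(H(\mathbb{G}(N,M))=M)$. The limits $H(c)$ and $p(c)$ exist for every $c>0$, and $H$ is Lipschitz continuous with constant $1$. *)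

(* Defs.v *)
From Stdlib Require Import Reals.
From mathcomp Require Import all_boot.

Set Implicit Arguments.
Unset Strict Implicit.
Unset Printing Implicit Defensive.

Inductive model := Coloring (q : nat) | KSAT (K : nat) | NAESAT (K : nat).

Definition model_ok (m : model) : Prop :=
  match m with
  | Coloring q => (2 <= q)%N
  | KSAT K => (2 <= K)%N
  | NAESAT K => (2 <= K)%N
  end.

Definition arity (m : model) : nat :=
  match m with Coloring _ => 2 | KSAT K => K | NAESAT K => K end.

Definition nq (m : model) : nat :=
  match m with Coloring q => q | KSAT _ => 2 | NAESAT _ => 2 end.

Definition label (m : model) : finType :=
  match m with
  | Coloring _ => unit
  | KSAT K => {ffun 'I_K -> bool}
  | NAESAT K => {ffun 'I_K -> bool}
  end.

Definition pot (m : model) :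
    label m -> {ffun 'I_(arity m) -> 'I_(nq m)} -> nat :=
  match m as m0 return label m0 -> {ffun 'I_(arity m0) -> 'I_(nq m0)} -> nat with
  | Coloring q => fun _ y => if nat_of_ord (y ord0) == nat_of_ord (y ord_max) then 0 else 1
  | KSAT K => fun a y =>
      if [forall k, nat_of_ord (y k) == nat_of_bool (a k)] then 0 else 1
  | NAESAT K => fun a y =>
      if [forall k, nat_of_ord (y k) == nat_of_bool (a k)]
         || [forall k, nat_of_ord (y k) == nat_of_bool (~~ a k)] then 0 else 1
  end.

(* sample space of G(N,M) (with its random labels): M independent uniform
   directed hyperedges in [N]^K (here 'I_N = {0..N-1}), each with an
   independent uniform label; the probability is uniform on this finite set *)
Definition Omega (N M : nat) (m : model) : finType :=
  {ffun 'I_M -> ({ffun 'I_(arity m) -> 'I_N} * label m)%type}.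

Definition Hval (N M : nat) (m : model) (w : Omega N M m)
    (x : {ffun 'I_N -> 'I_(nq m)}) : nat :=
  \sum_(i < M) pot (w i).2 [ffun k => x ((w i).1 k)].

Definition Hmax (N M : nat) (m : model) (w : Omega N M m) : nat :=
  \max_(x : {ffun 'I_N -> 'I_(nq m)}) Hval w x.

Definition probR (N M : nat) (m : model) (E : pred (Omega N M m)) : R :=
  Rdiv (INR #|E|) (INR #|Omega N M m|).

Definition pSAT (N M : nat) (m : model) : R :=
  probR (fun w : Omega N M m => Hmax w == M).

Definition Mof (c : R) (N : nat) : nat := Z.to_nat (Int_part (c * INR N)).

Definition dev_event (N M : nat) (m : model) (h eps : R) : pred (Omega N M m) :=
  fun w => if Rlt_dec eps (Rabs (Rminus (Rdiv (INR (Hmax w)) (INR N)) h)) then true else false.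

Arguments probR N M m E : clear implicits.
Arguments pSAT N M m : clear implicits.
Arguments dev_event N M m h eps : clear implicits.
Arguments Hmax N M m w : clear implicits.

(* Main.v *)
Require Import Defs.
From Stdlib Require Import Reals.
From mathcomp Require Import all_boot.
From Stdlib Require Import Lra Lia Classical.
From Stdlib Require ZArith.
From mathcomp Require Import zify.
Set Implicit Arguments.
Unset Strict Implicit.


Notation ET N m := ({ffun 'I_(arity m) -> 'I_N} * label m)%type.

Lemma pot_le1 m a y : (pot (m:=m) a y <= 1)%N.
Proof. case: m a y => [q|K|K] a y /=; by case: ifP. Qed.

Lemma Hval_le N M m (w : Omega N M m) x : (Hval w x <= M)%N.
Proof.
rewrite /Hval. rewrite -[X in (_ <= X)%N]card_ord -sum1_card.
by apply: leq_sum => i _; apply: pot_le1.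
Qed.

Lemma Hmax_le N M m (w : Omega N M m) : (Hmax N M m w <= M)%N.
Proof. by apply/bigmax_leqP => x _; apply: Hval_le. Qed.

Lemma Hmax_att N M m (w : Omega N M m) : (0 < nq m)%N ->
  exists x, Hmax N M m w = Hval w x.
Proof.
move=> hq. have h : (0 < #|{ffun 'I_N -> 'I_(nq m)}|)%N by rewrite card_ffun !card_ord expn_gt0 hq.
by case: (eq_bigmax (fun x => Hval w x) h) => x hx; exists x.
Qed.

Definition dropl N M m (w : Omega N M.+1 m) : Omega N M m :=
  [ffun i => w (widen_ord (leqnSn M) i)].

Lemma Hval_drop N M m (w : Omega N M.+1 m) x :
  Hval w x = (Hval (dropl w) x + pot (w ord_max).2 [ffun k => x ((w ord_max).1 k)])%N.
Proof. by rewrite /Hval big_ord_recr /=; congr (_ + _); apply: eq_bigr => i _; rewrite ffunE. Qed.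

Lemma Hmax_drop N M m (w : Omega N M.+1 m) : (0 < nq m)%N ->
  (Hmax N M.+1 m w <= (Hmax N M m (dropl w)).+1)%N.
Proof.
move=> hq; case: (Hmax_att w hq) => x ->; rewrite Hval_drop.
apply: (@leq_trans (Hmax N M m (dropl w) + 1)%N); last by rewrite addn1.
apply: leq_add; first exact: (leq_bigmax (F := fun x => Hval (dropl w) x)). exact: pot_le1.
Qed.

Lemma card_Omega N M m : #|Omega N M m| = (#|{: ET N m}| ^ M)%N.
Proof. by rewrite card_ffun card_ord. Qed.

Lemma one_step N M m (Q : pred (Omega N M.+1 m)) (R0 : pred (Omega N M m)) :
  (forall w, Q w -> R0 (dropl w)) -> (#|Q| <= #|R0| * #|{: ET N m}|)%N.
Proof.
move=> hQR.
pose f := fun w : Omega N M.+1 m => (dropl w, w ord_max).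
have inj : {in Q &, injective f}.
  move=> w1 w2 _ _ [e1 e2]; apply/ffunP => i.
  case: (ltnP i M) => hi.
  - have -> : i = widen_ord (leqnSn M) (Ordinal hi) by apply: val_inj.
    by rewrite -!(ffunE (fun j => w1 (widen_ord (leqnSn M) j))) -/(dropl w1) e1 /dropl ffunE.
  - have -> : i = ord_max by apply: val_inj => /=; have := ltn_ord i; lia.
    exact: e2.
rewrite -(card_in_imset inj).
have sub : [set f x | x in Q] \subset setX [set y | R0 y] [set: ET N m].
  apply/subsetP => p /imsetP [w hw ->]; rewrite !inE /= andbT; exact: hQR.
apply: leq_trans (subset_leq_card sub) _.
by rewrite cardsX cardsT; apply: leq_mul => //; rewrite cardsE.
Qed.

Lemma mono_le (P : nat -> bool) : (forall n, P n -> P n.+1) -> forall a b, (a <= b)%N -> P a -> P b.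
Proof.
move=> hP a b hab; rewrite -(subnKC hab); elim: (b - a)%N => [|k IH]; first by rewrite addn0.
by move=> /IH; rewrite addnS; apply: hP.
Qed.

Lemma iter_drop N m : (0 < nq m)%N -> forall d M (P : nat -> bool), (forall n, P n -> P n.+1) ->
  (#|[pred w : Omega N (d + M) m | P (Hmax _ _ _ w)]| * #|{: ET N m}| ^ M <=
   #|[pred w : Omega N M m | P (Hmax _ _ _ w + d)%N]| * #|{: ET N m}| ^ (d + M))%N.
Proof.
move=> hq; elim=> [|d IH] M P hP.
  rewrite add0n; apply: leq_mul => //; apply: subset_leq_card; apply/subsetP => w.
  by rewrite !inE addn0.
have h1 := @one_step N (d + M) m [pred w : Omega N (d.+1 + M) m | P (Hmax _ _ _ w)]
   [pred w : Omega N (d + M) m | P (Hmax _ _ _ w).+1].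
have h2 : (#|[pred w : Omega N (d.+1 + M) m | P (Hmax _ _ _ w)]| <=
   #|[pred w : Omega N (d + M) m | P (Hmax _ _ _ w).+1]| * #|{: ET N m}|)%N.
  apply: h1 => w /= hw; apply: (mono_le hP _ hw); exact: Hmax_drop.
have h3 := IH M (fun n => P n.+1) (fun n => hP n.+1).
apply: leq_trans (leq_mul h2 (leqnn _)) _.
rewrite mulnAC; apply: leq_trans (leq_mul h3 (leqnn _)) _.
rewrite -mulnA -expnSr addSn; apply: leq_mul => //.
by apply: subset_leq_card; apply/subsetP => w; rewrite !inE addnS.
Qed.

Definition gp N m (x : {ffun 'I_N -> 'I_(nq m)}) (e : ET N m) : nat :=
  pot e.2 [ffun k => x (e.1 k)].

Lemma sum_pow N M m x :
  (\sum_(w : Omega N M m) 2 ^ (Hval w x) = (\sum_(e : ET N m) 2 ^ (gp x e)) ^ M)%N.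
Proof.
rewrite /Hval.
under eq_bigr => w _ do rewrite expn_sum.
rewrite -(bigA_distr_bigA (fun (i : 'I_M) (e : ET N m) => 2 ^ gp x e)).
by rewrite prod_nat_const card_ord.
Qed.

Lemma sum_pow_B N m x :
  (\sum_(e : ET N m) 2 ^ (gp x e) + #|[pred e : ET N m | gp x e == 0]| = 2 * #|{: ET N m}|)%N.
Proof.
rewrite -sum1_card (big_mkcond (fun e => _ == _)) /= -big_split /= -sum1_card big_distrr /=.
apply: eq_bigr => e _; rewrite muln1.
have := pot_le1 e.2 [ffun k => x (e.1 k)]; rewrite /gp.
by case: (pot _ _) => [|[|]] //.
Qed.

Lemma count_x N M m x k :
  (#|[pred w : Omega N M m | M <= Hval w x + k]| * 2 ^ M <=
   2 ^ k * (\sum_(e : ET N m) 2 ^ (gp x e)) ^ M)%N.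
Proof.
rewrite -sum_pow -sum1_card big_distrl /= big_distrr /=.
apply: leq_trans (_ : \sum_(w in [pred w : Omega N M m | M <= Hval w x + k]) 2 ^ k * 2 ^ Hval w x <= _)%N.
  apply: leq_sum => w; rewrite inE => hw; rewrite mul1n -expnD addnC.
  by rewrite leq_exp2l.
rewrite big_mkcond /=; apply: leq_sum => w _; by case: ifP.
Qed.

Lemma union_bound N M m k : (0 < nq m)%N ->
  (#|[pred w : Omega N M m | M <= Hmax _ _ _ w + k]| <=
   \sum_(x : {ffun 'I_N -> 'I_(nq m)}) #|[pred w : Omega N M m | M <= Hval w x + k]|)%N.
Proof.
move=> hq.
rewrite -sum1_card.
under [X in (_ <= X)%N]eq_bigr => x _ do rewrite -sum1_card.
under [X in (_ <= X)%N]eq_bigr => x _ do rewrite big_mkcond /=.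
rewrite (exchange_big) /= big_mkcond /=.
apply: leq_sum => w _; case: ifP => // hw.
rewrite inE in hw; case: (Hmax_att w hq) => x hx; rewrite hx in hw.
rewrite (bigD1 x) //= inE hw; exact: leq_addr.
Qed.

Definition dm (m : model) : nat :=
  match m with Coloring q => (q * q)%N | KSAT K => (2 ^ K)%N | NAESAT K => (2 ^ K)%N end.

Lemma ord2_val (y : 'I_2) : nat_of_bool (nat_of_ord y == 1%N) = y.
Proof. by case: y => [[|[|]]]. Qed.

Lemma Bbound_sat N K (b : bool) (x : {ffun 'I_N -> 'I_(nq (if b then KSAT K else NAESAT K))}) :
  (#|{: ET N (if b then KSAT K else NAESAT K)}| <=
   #|[pred e : ET N (if b then KSAT K else NAESAT K) | gp x e == 0]| * 2 ^ K)%N.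
Proof.
case: b x => x /=;
pose f := fun v : {ffun 'I_K -> 'I_N} => (v, [ffun k => nat_of_ord (x (v k)) == 1%N]);
(have inj : injective f by move=> v1 v2 []);
rewrite card_prod [X in (_ * X <= _)%N]card_ffun card_ord card_bool leq_mul2r; apply/orP; right;
rewrite -(card_imset _ inj); apply: subset_leq_card; apply/subsetP => e /imsetP [v _ ->];
rewrite inE /gp /=;
(have -> : [forall k, nat_of_ord ([ffun k => x (v k)] k) == nat_of_bool ([ffun k => nat_of_ord (x (v k)) == 1%N] k)]
  by apply/forallP => k; rewrite !ffunE ord2_val) => //.
Qed.

Lemma Bbound_col N q (x : {ffun 'I_N -> 'I_q}) : (0 < q)%N ->
  (#|{: ({ffun 'I_2 -> 'I_N} * unit)%type}| <=
   #|[pred e : ({ffun 'I_2 -> 'I_N} * unit)%type |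
       nat_of_ord (x (e.1 ord0)) == nat_of_ord (x (e.1 ord_max))]| * (q * q))%N.
Proof.
move=> hq.
have hc : (0 < #|'I_q|)%N by rewrite card_ord.
case: (eq_bigmax (fun c : 'I_q => #|[pred u | x u == c]|) hc) => c hc'.
set n := #|[pred u | x u == c]| in hc'.
have hN : (N <= q * n)%N.
  have -> : N = (\sum_(c0 : 'I_q) #|[pred u | x u == c0]|)%N.
    rewrite -{1}(card_ord N) -sum1_card (partition_big x predT) //=.
    by apply: eq_bigr => c0 _; rewrite -sum1_card.
  rewrite -[X in (_ <= X * _)%N](card_ord q) -sum_nat_const.
  apply: leq_sum => c0 _; rewrite -hc'.
  exact: (leq_bigmax (F := fun c1 : 'I_q => #|[pred u | x u == c1]|)).
pose f := fun v : {ffun 'I_2 -> 'I_N} => (v, tt).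
have inj : injective f by move=> v1 v2 [].
have h1 : (n ^ 2 <= #|[pred e : ({ffun 'I_2 -> 'I_N} * unit)%type |
       nat_of_ord (x (e.1 ord0)) == nat_of_ord (x (e.1 ord_max))]|)%N.
  have -> : (n ^ 2 = #|(ffun_on_mem 'I_2 (mem [pred u | x u == c]))|)%N by rewrite card_ffun_on card_ord.
  rewrite -(card_in_imset (f := f) (D := (ffun_on_mem 'I_2 (mem [pred u | x u == c])))); last by move=> ? ? _ _; apply: inj.
  apply: subset_leq_card; apply/subsetP => e /imsetP [v hv ->].
  rewrite inE /=; have := hv => /ffun_onP h.
  by have := h ord0; have := h ord_max; rewrite !inE => /eqP -> /eqP ->.
rewrite card_prod card_unit muln1 card_ffun !card_ord.
apply: leq_trans (_ : (n ^ 2 * (q * q) <= _)%N); last by rewrite leq_mul2r h1 orbT.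
have : (N * N <= (q * n) * (q * n))%N by apply: leq_mul.
rewrite expnS expn1; lia.
Qed.

Lemma Bbound N m (x : {ffun 'I_N -> 'I_(nq m)}) : model_ok m ->
  (#|{: ET N m}| <= #|[pred e : ET N m | gp x e == 0]| * dm m)%N.
Proof.
case: m x => [q|K|K] x /= hm.
- have hq0 : (0 < q)%N by lia.
  apply: leq_trans (Bbound_col x hq0) _.
  rewrite leq_mul2r; apply/orP; right; apply: subset_leq_card; apply/subsetP => e.
  by rewrite !inE /gp /= !ffunE => ->.
- apply: leq_trans (Bbound_sat (b := true) x) _.
  rewrite leq_mul2r; apply/orP; right; apply: subset_leq_card; apply/subsetP => e.
  by [].
- apply: leq_trans (Bbound_sat (b := false) x) _.
  rewrite leq_mul2r; apply/orP; right; apply: subset_leq_card; apply/subsetP => e.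
  by [].
Qed.

Lemma dm_pos m : model_ok m -> (0 < dm m)%N.
Proof. case: m => [q|K|K] /= h; rewrite ?expn_gt0 ?muln_gt0 //; apply/andP; split; lia. Qed.

Lemma nq_pos m : model_ok m -> (0 < nq m)%N.
Proof. case: m => [q|K|K] //= h; lia. Qed.

Lemma leq_exp2r_helper a b e : (a <= b)%N -> (a ^ e <= b ^ e)%N.
Proof. move=> h; case: e => [|e] //; by rewrite leq_exp2r. Qed.

Lemma first_moment N M m k : model_ok m ->
  (#|[pred w : Omega N M m | M <= Hmax _ _ _ w + k]| * (2 * dm m) ^ M <=
   nq m ^ N * 2 ^ k * (2 * dm m - 1) ^ M * #|{: ET N m}| ^ M)%N.
Proof.
move=> hm; have hq := nq_pos hm; have hd := dm_pos hm.
apply: leq_trans (leq_mul (@union_bound N M m k hq) (leqnn _)) _.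
rewrite expnMn mulnA big_distrl /= big_distrl /=.
have -> : (nq m ^ N = #|{: {ffun 'I_N -> 'I_(nq m)}}|)%N by rewrite card_ffun !card_ord.
rewrite -!mulnA -sum_nat_const; apply: leq_sum => x _.
have h0 := @count_x N M m x k.
have h1 := sum_pow_B x; have h2 := Bbound x hm.
set S := (\sum_(e : ET N m) _)%N in h0 h1 *.
set B := #|[pred e : ET N m | _]| in h1 h2.
set Z := #|{: ET N m}| in h1 h2 *.
set C := #|_| in h0 *.
have h3 : (S * dm m <= (2 * dm m - 1) * Z)%N by nia.
apply: leq_trans (leq_mul h0 (leqnn _)) _.
rewrite -mulnA leq_mul2l; apply/orP; right.
rewrite -!expnMn; apply: leq_exp2r_helper h3.
Qed.

Lemma sat_edge N m : model_ok m -> (2 <= N)%N ->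
  exists (x : {ffun 'I_N -> 'I_(nq m)}) (e : ET N m), gp x e = 1%N.
Proof.
move=> hm hN.
have hN0 : (0 < N)%N by lia. have hN1 : (1 < N)%N by lia.
pose v0 := Ordinal hN0; pose v1 := Ordinal hN1.
case: m hm => [q|K|K] /= hm.
- have hq0 : (0 < q)%N by lia.
  pose c0 := Ordinal hq0; pose c1 := Ordinal hm.
  exists [ffun u : 'I_N => if nat_of_ord u == 0%N then c0 else c1].
  exists ([ffun j : 'I_2 => if nat_of_ord j == 0%N then v0 else v1], tt).
  by rewrite /gp /= !ffunE.
- have hK : (0 < K)%N by lia.
  exists [ffun _ => (Ordinal (isT : 0 < 2)%N : 'I_(nq (KSAT K)))].
  exists ([ffun _ => v0], [ffun _ => true]).
  rewrite /gp /=; case: ifP => // /forallP /(_ (Ordinal hK)).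
  by rewrite !ffunE.
- have hK : (0 < K)%N by lia.
  exists [ffun _ => (Ordinal (isT : 0 < 2)%N : 'I_(nq (NAESAT K)))].
  exists ([ffun _ => v0], [ffun k : 'I_K => nat_of_ord k == 0%N]).
  rewrite /gp /=; case: ifP => // /orP [/forallP /(_ (Ordinal hK)) | /forallP /(_ (Ordinal hm))].
  all: by rewrite !ffunE.
Qed.

Lemma sat_pos N M m : model_ok m -> (2 <= N)%N ->
  (0 < #|[pred w : Omega N M m | Hmax _ _ _ w == M]|)%N.
Proof.
move=> hm hN; case: (sat_edge hm hN) => x [e he].
apply/card_gt0P; exists [ffun _ => e]; rewrite inE eqn_leq Hmax_le /=.
apply: leq_trans (leq_bigmax (F := fun x => Hval [ffun _ => e] x) x).
rewrite /Hval -[X in (X <= _)%N]card_ord -sum1_card; apply: leq_sum => i _.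
by rewrite ffunE -[X in (X <= _)%N]he.
Qed.

Lemma iter_drop' N m M1 M2 (P : nat -> bool) : (0 < nq m)%N -> (forall n, P n -> P n.+1) ->
  (M1 <= M2)%N ->
  (#|[pred w : Omega N M2 m | P (Hmax _ _ _ w)]| * #|{: ET N m}| ^ M1 <=
   #|[pred w : Omega N M1 m | P (Hmax _ _ _ w + (M2 - M1))%N]| * #|{: ET N m}| ^ M2)%N.
Proof.
move=> hq hP h12.
have := @iter_drop N m hq (M2 - M1) M1 P hP.
by rewrite subnK.
Qed.


Local Open Scope R_scope.

Lemma INR_Z2N z : (0 <= z)%Z -> INR (Z.to_nat z) = IZR z.
Proof. move=> h; rewrite INR_IZR_INZ Znat.Z2Nat.id //. Qed.

Lemma Mof_bounds c N : 0 <= c ->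
  INR (Mof c N) <= c * INR N /\ c * INR N - 1 < INR (Mof c N).
Proof.
move=> hc; rewrite /Mof.
have hN : 0 <= INR N by apply: pos_INR.
have [h1 h2] := base_Int_part (c * INR N).
have hz : (0 <= Int_part (c * INR N))%Z.
  have : -1 < IZR (Int_part (c * INR N)) by nra.
  move=> h; have : (-1 < Int_part (c * INR N))%Z by apply: lt_IZR.
  lia.
rewrite INR_Z2N //; lra.
Qed.

Lemma nat_above x : exists n : nat, x < INR n.
Proof.
case: (ZArith_dec.Z_le_gt_dec 0 (Int_part x)) => h.
- exists (Z.to_nat (Int_part x) + 1)%nat; rewrite plus_INR INR_Z2N //.
  have [h1 h2] := base_Int_part x; simpl; lra.
- exists 1%nat; have [h1 h2] := base_Int_part x.
  have : IZR (Int_part x) <= -1 by apply: IZR_le; lia.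
  simpl; lra.
Qed.

Lemma Mof_mono c1 c2 N : 0 <= c1 <= c2 -> (Mof c1 N <= Mof c2 N)%N.
Proof.
move=> [h1 h2]; have [a1 b1] := Mof_bounds N h1.
have [a2 b2] := Mof_bounds N (Rle_trans _ _ _ h1 h2).
have hN : 0 <= INR N by apply: pos_INR.
have : INR (Mof c1 N) < INR (Mof c2 N) + 1 by nra.
rewrite -S_INR => /INR_lt; lia.
Qed.

Lemma dev_eventP N M m h eps w :
  dev_event N M m h eps w = true <-> eps < Rabs (INR (Hmax N M m w) / INR N - h).
Proof. rewrite /dev_event; case: Rlt_dec => //. Qed.

Lemma cv_small (u : nat -> R) d : Un_cv u 0 -> 0 < d -> exists N0, forall n, (N0 <= n)%coq_nat -> u n < d.
Proof.
move=> hu hd; case: (hu d hd) => N0 hN0; exists N0 => n hn.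
have := hN0 n hn; rewrite /R_dist Rminus_0_r => h.
have := Rle_abs (u n); lra.
Qed.

Lemma prob_half N M m (E : pred (Omega N M m)) :
  (0 < #|Omega N M m|)%N -> probR N M m E < /2 -> (2 * #|E| < #|Omega N M m|)%N.
Proof.
rewrite /probR => hpos h.
have hp : 0 < INR #|Omega N M m| by apply: lt_0_INR; apply/ltP.
have h2 : INR #|E| * 2 < INR #|Omega N M m|.
  have := Rmult_lt_compat_r (INR #|Omega N M m|) _ _ hp h.
  rewrite /Rdiv Rmult_assoc Rinv_l; lra.
have h3 : INR (2 * #|E|) < INR #|Omega N M m| by rewrite mult_INR (_ : INR 2 = 2); [lra | simpl; lra].
have := INR_lt _ _ h3; lia.
Qed.

Lemma Z_pos N m : (0 < N)%N -> (0 < #|{: ET N m}|)%N.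
Proof.
move=> hN; apply/card_gt0P.
have l0 : label m by case: m => [q|K|K] /=; [exact: tt | exact: [ffun _ => true] | exact: [ffun _ => true]].
by exists ([ffun _ => Ordinal hN], l0).
Qed.

Lemma Omega_pos N M m : (0 < N)%N -> (0 < #|Omega N M m|)%N.
Proof. move=> hN; rewrite card_Omega expn_gt0 Z_pos //. Qed.

Lemma div_le a b n : 0 < n -> a <= b * n -> a / n <= b.
Proof.
move=> hn h; apply: (Rmult_le_reg_r n) => //.
rewrite /Rdiv Rmult_assoc Rinv_l; lra.
Qed.

Lemma div_ge a b n : 0 < n -> b * n <= a -> b <= a / n.
Proof.
move=> hn h; apply: (Rmult_le_reg_r n) => //.
rewrite /Rdiv Rmult_assoc Rinv_l; lra.
Qed.

Lemma div_gt a b n : 0 < n -> b * n < a -> b < a / n.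
Proof.
move=> hn h; apply: (Rmult_lt_reg_r n) => //.
rewrite /Rdiv Rmult_assoc Rinv_l; lra.
Qed.

Lemma div_lt a b n : 0 < n -> a < b * n -> a / n < b.
Proof.
move=> hn h; apply: (Rmult_lt_reg_r n) => //.
rewrite /Rdiv Rmult_assoc Rinv_l; lra.
Qed.

Lemma INR_expn a n : INR (a ^ n)%N = INR a ^ n.
Proof.
elim: n => [|n IH]; first by rewrite expn0.
by rewrite expnS -multE mult_INR IH.
Qed.

Definition Qr m := INR (nq m).
Definition Dr m := INR (dm m).
Definition rr m := (2 * Dr m - 1) / (2 * Dr m).

Lemma Dr_ge1 m : model_ok m -> 1 <= Dr m.
Proof. move=> hm; rewrite /Dr; apply: (le_INR 1); apply/leP; exact: dm_pos. Qed.

Lemma Qr_ge1 m : model_ok m -> 1 <= Qr m.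
Proof. move=> hm; rewrite /Qr; apply: (le_INR 1); apply/leP; exact: nq_pos. Qed.

Lemma rr_bounds m : model_ok m -> 0 < rr m < 1.
Proof.
move=> hm; have := Dr_ge1 hm; rewrite /rr => h; split.
- apply: Rdiv_lt_0_compat; lra.
- apply: div_lt; lra.
Qed.

Lemma fm_real N M m k : model_ok m ->
  INR #|[pred w : Omega N M m | M <= Hmax _ _ _ w + k]%N| <=
  Qr m ^ N * 2 ^ k * rr m ^ M * INR #|Omega N M m|.
Proof.
move=> hm.
have h := first_moment N M k hm.
have hD := Dr_ge1 hm.
have := le_INR _ _ (elimT leP h).
rewrite -!multE !mult_INR !INR_expn mult_INR minus_INR; last first.
  apply/leP; have := dm_pos hm; lia.
rewrite card_Omega INR_expn.
have -> : INR 2 = 2 by simpl; lra.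
rewrite -/(Dr m) -/(Qr m).
have e : 2 * Dr m - 1 = rr m * (2 * Dr m) by rewrite /rr; field; lra.
rewrite mult_INR (_ : INR 2 = 2); last by simpl; lra.
rewrite -/(Dr m) (_ : INR 1 = 1) // e Rpow_mult_distr => hh.
have hp : 0 < (2 * Dr m) ^ M by apply: pow_lt; lra.
apply: (Rmult_le_reg_r ((2 * Dr m) ^ M)) => //.
rewrite !Rpow_mult_distr in hh *; apply: Rle_trans hh _; right; ring.
Qed.

Definition Cbig m := (ln (2 * Qr m) + 1) / (- ln (rr m)).

Lemma Cbig_facts m : model_ok m ->
  ln (rr m) < 0 /\ 0 < ln (2 * Qr m) /\ 0 < Cbig m /\ ln (2 * Qr m) + Cbig m * ln (rr m) = -1.
Proof.
move=> hm; have [r0 r1] := rr_bounds hm; have hQ := Qr_ge1 hm.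
have lr : ln (rr m) < 0 by rewrite -ln_1; apply: ln_increasing.
have lq : 0 < ln (2 * Qr m) by rewrite -ln_1; apply: ln_increasing; lra.
split => //; split => //; split.
- rewrite /Cbig; apply: Rdiv_lt_0_compat; lra.
- rewrite /Cbig; field; lra.
Qed.

Lemma ln_split3 a b c : 0 < a -> 0 < b -> 0 < c -> ln (a * b * c) = ln a + ln b + ln c.
Proof. move=> ha hb hc; rewrite !ln_mult //; apply: Rmult_lt_0_compat => //. Qed.

Section HPart.
Variable m : model.
Hypothesis hm : model_ok m.
Variable Hlim : R -> R.
Hypothesis HypH : forall c : R, 0 < c -> forall eps : R, 0 < eps ->
     Un_cv (fun N => probR N (Mof c N) m (dev_event N (Mof c N) m (Hlim c) eps)) 0.

Lemma H_le_c c : 0 < c -> Hlim c <= c.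
Proof.
move=> hc; apply: Rnot_lt_le => hlt.
set eps := (Hlim c - c) / 2.
have heps : 0 < eps by rewrite /eps; lra.
case: (cv_small (HypH hc heps) (Rinv_0_lt_compat 2 Rlt_0_2)) => N0 hN0.
set N := (N0 + 1)%nat.
have hNpos : (0 < N)%N by rewrite /N; lia.
have hNR : 0 < INR N by apply: lt_0_INR; rewrite /N; lia.
have hp := prob_half (Omega_pos _ _ hNpos) (hN0 N ltac:(rewrite /N; lia)).
have : (#|Omega N (Mof c N) m| <= #|dev_event N (Mof c N) m (Hlim c) eps|)%N.
  apply: subset_leq_card; apply/subsetP => w _.
  rewrite unfold_in; apply/dev_eventP.
  have h1 : INR (Hmax N (Mof c N) m w) <= INR (Mof c N) by apply: le_INR; apply/leP; apply: Hmax_le.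
  have [h2 _] := Mof_bounds N (Rlt_le _ _ hc).
  have h3 : INR (Hmax N (Mof c N) m w) / INR N <= c by apply: div_le => //; lra.
  rewrite Rabs_left; rewrite /eps; lra.
lia.
Qed.

Lemma H_mono c1 c2 : 0 < c1 -> c1 < c2 -> Hlim c2 - c2 <= Hlim c1 - c1.
Proof.
move=> hc1 h12; apply: Rnot_lt_le => hlt.
set eps := ((Hlim c2 - c2) - (Hlim c1 - c1)) / 4.
have heps : 0 < eps by rewrite /eps; lra.
have hc2 : 0 < c2 by lra.
case: (cv_small (HypH hc2 heps) (Rinv_0_lt_compat 2 Rlt_0_2)) => A hA.
case: (cv_small (HypH hc1 heps) (Rinv_0_lt_compat 2 Rlt_0_2)) => B hB.
case: (nat_above (/ eps)) => n1 hn1.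
pose N := (A + B + n1 + 1)%nat.
have hNpos : (0 < N)%N by rewrite /N; lia.
have hNR : 0 < INR N by apply: lt_0_INR; rewrite /N; lia.
have hNe : 1 < eps * INR N.
  have : INR n1 <= INR N by apply: le_INR; rewrite /N; lia.
  have : eps * / eps = 1 by field; lra.
  nra.
have p2 := prob_half (Omega_pos _ _ hNpos) (hA N ltac:(rewrite /N; lia)).
have p1 := prob_half (Omega_pos _ _ hNpos) (hB N ltac:(rewrite /N; lia)).
have [a1 b1] := Mof_bounds N (Rlt_le _ _ hc1).
have [a2 b2] := Mof_bounds N (Rlt_le _ _ hc2).
have le12 : (Mof c1 N <= Mof c2 N)%N by apply: Mof_mono; lra.
move: (Mof c1 N) (Mof c2 N) p1 p2 a1 b1 a2 b2 le12 => M1 M2 p1 p2 a1 b1 a2 b2 le12.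
pose th := (Hlim c2 - eps) * INR N.
pose P := fun n : nat => if Rle_dec th (INR n) then true else false.
have hP : forall n, P n -> P n.+1.
  move=> n; rewrite /P; case: Rle_dec => // h _; case: Rle_dec => // [] [].
  rewrite S_INR; lra.
have it := @iter_drop' N m M1 M2 P (nq_pos hm) hP le12.
set Z := #|{: ET N m}| in it.
have hZ : (0 < Z)%N by apply: Z_pos.
have sub2 : (#|[predC dev_event N M2 m (Hlim c2) eps]| <= #|[pred w : Omega N M2 m | P (Hmax _ _ _ w)]|)%N.
  apply: subset_leq_card; apply/subsetP => w; rewrite !inE /P => hw.
  case: Rle_dec => // [] [].
  have hw' : ~ (eps < Rabs (INR (Hmax N M2 m w) / INR N - Hlim c2)).
    by move/dev_eventP; move: hw; rewrite unfold_in => /negP.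
  have hy : Hlim c2 - eps <= INR (Hmax N M2 m w) / INR N.
    have hh := Rnot_lt_le _ _ hw'.
    have := Rle_abs (- (INR (Hmax N M2 m w) / INR N - Hlim c2)). rewrite Rabs_Ropp. lra.
  have := Rmult_le_compat_r (INR N) _ _ (Rlt_le _ _ hNR) hy.
  rewrite /Rdiv Rmult_assoc Rinv_l; [rewrite /th; lra | lra].
have sub1 : (#|[pred w : Omega N M1 m | P (Hmax _ _ _ w + (M2 - M1))%N]| <= #|dev_event N M1 m (Hlim c1) eps|)%N.
  apply: subset_leq_card; apply/subsetP => w; rewrite !inE /P.
  case: Rle_dec => // hth _.
  rewrite unfold_in; apply/dev_eventP.
  have hd : INR (Hmax N M1 m w + (M2 - M1)) = INR (Hmax N M1 m w) + INR M2 - INR M1.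
    rewrite plus_INR minus_INR; [lra | apply/leP; exact: le12].
  rewrite hd /th in hth.
  have hgt : Hlim c1 + eps < INR (Hmax N M1 m w) / INR N.
    apply: div_gt => //.
    have e1 : Hlim c1 = Hlim c2 - c2 + c1 - 4 * eps by rewrite /eps; field.
    rewrite e1; nra.
  rewrite Rabs_right; lra.
have cC2 := cardC (dev_event N M2 m (Hlim c2) eps).
rewrite !card_Omega -/Z in p1 p2 cC2.
move: p1 p2 cC2 sub1 sub2 it.
set X := (Z ^ M1)%N; set Y := (Z ^ M2)%N.
have hX : (0 < X)%N by rewrite expn_gt0 hZ.
have hY : (0 < Y)%N by rewrite expn_gt0 hZ.
set a := #|dev_event N M2 m _ _|; set na := #|[predC _]|.
set e := #|[pred w : Omega N M1 m | _]|; set f := #|dev_event N M1 m _ _|.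
set h := #|[pred w : Omega N M2 m | _]|.
move=> p1 p2 cC2 sub1 sub2 it.
have s1 : (2 * na * X <= 2 * f * Y)%N by nia.
nia.
Qed.

Lemma H_big : Hlim (Cbig m) < Cbig m.
Proof.
have [lr [lq [hC he]]] := Cbig_facts hm.
set C := Cbig m in hC he *.
have hle := H_le_c hC.
case: (Rle_lt_or_eq_dec _ _ hle) => // hEq.
have heps : 0 < /2 by lra.
case: (cv_small (HypH hC heps) heps) => A hA.
case: (nat_above (ln 2 - ln (rr m))) => n1 hn1.
pose N := (A + n1 + 1)%nat.
have hNpos : (0 < N)%N by rewrite /N; lia.
have hNR : 0 < INR N by apply: lt_0_INR; rewrite /N; lia.
have hNn : INR n1 <= INR N by apply: le_INR; rewrite /N; lia.
have p := prob_half (Omega_pos _ _ hNpos) (hA N ltac:(rewrite /N; lia)).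
have [a1 b1] := Mof_bounds N (Rlt_le _ _ hC).
have fm := @fm_real N (Mof C N) m N hm.
have hOm := Omega_pos (Mof C N) m hNpos.
move: (Mof C N) p a1 b1 fm hOm => M p a1 b1 fm hOm.
have sub : (#|[predC dev_event N M m (Hlim C) (/2)]| <= #|[pred w : Omega N M m | M <= Hmax _ _ _ w + N]%N|)%N.
  apply: subset_leq_card; apply/subsetP => w; rewrite !inE => hw.
  have hw' : ~ (/2 < Rabs (INR (Hmax N M m w) / INR N - Hlim C)).
    by move/dev_eventP; move: hw; rewrite unfold_in => /negP.
  have hh := Rnot_lt_le _ _ hw'.
  have hy : C - /2 <= INR (Hmax N M m w) / INR N.
    have := Rle_abs (- (INR (Hmax N M m w) / INR N - Hlim C)); rewrite Rabs_Ropp; lra.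
  have := Rmult_le_compat_r (INR N) _ _ (Rlt_le _ _ hNR) hy.
  rewrite /Rdiv Rmult_assoc Rinv_l; last lra.
  move=> h2; apply/leP; apply: INR_le; rewrite plus_INR; nra.
have cC := cardC (dev_event N M m (Hlim C) (/2)).
have hlt : (#|Omega N M m| < 2 * #|[pred w : Omega N M m | M <= Hmax _ _ _ w + N]%N|)%N.
  rewrite -cC; lia.
have hR := lt_INR _ _ (elimT ltP hlt).
rewrite mult_INR (_ : INR 2 = 2) in hR; last by simpl; lra.
have hO : 0 < INR #|Omega N M m| by apply: lt_0_INR; apply/ltP.
have [r0 r1] := rr_bounds hm; have hQ := Qr_ge1 hm.
have h1 : 1 < 2 * (Qr m ^ N * 2 ^ N * rr m ^ M).
  apply: (Rmult_lt_reg_r (INR #|Omega N M m|)) => //; nra.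
have hpos : 0 < Qr m ^ N * 2 ^ N * rr m ^ M.
  apply: Rmult_lt_0_compat; [apply: Rmult_lt_0_compat|]; apply: pow_lt; lra.
have := ln_increasing _ _ Rlt_0_1 h1.
rewrite ln_1 ln_mult; [|lra|lra].
rewrite ln_split3; try (apply: pow_lt; lra).
rewrite !ln_pow; try lra.
rewrite ln_mult in he; try lra.
nra.
Qed.

End HPart.

Lemma cv_le2 (u v : nat -> R) l1 l2 : Un_cv u l1 -> Un_cv v l2 ->
  (exists N0, forall n, (N0 <= n)%N -> u n <= v n) -> l1 <= l2.
Proof.
move=> hu hv [N0 hN0]; apply: Rnot_lt_le => hlt.
set e := (l1 - l2) / 2.
have he : 0 < e by rewrite /e; lra.
case: (hu e he) => A hA; case: (hv e he) => B hB.
have hn : (N0 <= N0 + A + B)%N by lia.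
have := hN0 _ hn.
have := hA (N0 + A + B)%nat ltac:(lia); have := hB (N0 + A + B)%nat ltac:(lia).
rewrite /R_dist => h1 h2 h3.
have := Rle_abs (u (N0 + A + B)%nat - l1); have := Rle_abs (- (u (N0 + A + B)%nat - l1)).
have := Rle_abs (v (N0 + A + B)%nat - l2); rewrite Rabs_Ropp.
rewrite /e in h1 h2; lra.
Qed.

Lemma cv_le (u : nat -> R) l K : Un_cv u l ->
  (exists N0, forall n, (N0 <= n)%N -> u n <= K) -> l <= K.
Proof.
move=> hu hev; apply: (cv_le2 hu (v := fun _ => K)) => //.
move=> e he; exists 0%nat => n _; rewrite /R_dist Rminus_diag Rabs_R0 //.
Qed.

Lemma probR_le1 N M m (E : pred (Omega N M m)) : (0 < N)%N -> probR N M m E <= 1.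
Proof.
move=> hN; rewrite /probR.
have hO : 0 < INR #|Omega N M m| by apply: lt_0_INR; apply/ltP; apply: Omega_pos.
apply: div_le => //; rewrite Rmult_1_l; apply: le_INR; apply/leP; exact: max_card.
Qed.

Lemma pSAT_pos N M m : model_ok m -> (2 <= N)%N -> 0 < pSAT N M m.
Proof.
move=> hm hN; rewrite /pSAT /probR.
have hO : 0 < INR #|Omega N M m| by apply: lt_0_INR; apply/ltP; apply: Omega_pos; lia.
apply: Rdiv_lt_0_compat => //; apply: lt_0_INR; apply/ltP; exact: sat_pos.
Qed.

Lemma pSAT_mono N M1 M2 m : model_ok m -> (0 < N)%N -> (M1 <= M2)%N -> pSAT N M2 m <= pSAT N M1 m.
Proof.
move=> hm hN h12; rewrite /pSAT /probR.
pose P := fun n : nat => (M2 <= n)%N.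
have it := @iter_drop' N m M1 M2 P (nq_pos hm) (fun n (h : P n) => leqW h) h12.
set Z := #|{: ET N m}| in it.
have hZ : (0 < Z)%N by apply: Z_pos.
have e2 : #|[pred w : Omega N M2 m | Hmax _ _ _ w == M2]| = #|[pred w : Omega N M2 m | P (Hmax _ _ _ w)]|.
  apply: eq_card => w; rewrite !inE /P eqn_leq Hmax_le //.
have e1 : (#|[pred w : Omega N M1 m | P (Hmax _ _ _ w + (M2 - M1))%N]| <= #|[pred w : Omega N M1 m | Hmax _ _ _ w == M1]|)%N.
  apply: subset_leq_card; apply/subsetP => w; rewrite !inE /P eqn_leq Hmax_le //=.
  have := Hmax_le w; lia.
rewrite !card_Omega -/Z.
have hc : (#|[pred w : Omega N M2 m | Hmax _ _ _ w == M2]| * Z ^ M1 <= #|[pred w : Omega N M1 m | Hmax _ _ _ w == M1]| * Z ^ M2)%N.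
  rewrite e2; apply: leq_trans it _; rewrite leq_mul2r e1 orbT //.
have hR := le_INR _ _ (elimT leP hc).
rewrite !mult_INR !INR_expn in hR.
have h1 : 0 < INR Z ^ M1 by apply: pow_lt; apply: lt_0_INR; apply/ltP.
have h2 : 0 < INR Z ^ M2 by apply: pow_lt; apply: lt_0_INR; apply/ltP.
rewrite !INR_expn.
apply: (Rmult_le_reg_r (INR Z ^ M1 * INR Z ^ M2)); first nra.
rewrite /Rdiv.
have -> : forall a b c, a * / b * (c * b) = a * c * (b * / b) by move=> *; ring.
have -> : forall a b c, a * / b * (b * c) = a * c * (b * / b) by move=> *; ring.
rewrite !Rinv_r; try lra. rewrite !Rmult_1_r; exact: hR.
Qed.

Section PPart.
Variable m : model.
Hypothesis hm : model_ok m.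
Variable plim : R -> R.
Hypothesis Hypp : forall c : R, 0 < c ->
     Un_cv (fun N => ln (pSAT N (Mof c N) m) / INR N) (plim c).

Lemma p_le0 c : 0 < c -> plim c <= 0.
Proof.
move=> hc; apply: (cv_le (Hypp hc)); exists 2%nat => n hn.
have hp := pSAT_pos (Mof c n) hm hn.
have hp1 : pSAT n (Mof c n) m <= 1 by apply: probR_le1; lia.
have hNR : 0 < INR n by apply: lt_0_INR; lia.
apply: div_le => //; rewrite Rmult_0_l -ln_1.
case: (Rle_lt_or_eq_dec _ _ hp1) => h.
- left; apply: ln_increasing => //.
- by rewrite h; right.
Qed.

Lemma p_mono c1 c2 : 0 < c1 -> c1 < c2 -> plim c2 <= plim c1.
Proof.
move=> hc1 h12; have hc2 : 0 < c2 by lra.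
apply: (cv_le2 (Hypp hc2) (Hypp hc1)); exists 2%nat => n hn.
have hp := pSAT_pos (Mof c2 n) hm hn.
have hmono := @pSAT_mono n (Mof c1 n) (Mof c2 n) m hm ltac:(lia) (Mof_mono n (conj (Rlt_le _ _ hc1) (Rlt_le _ _ h12))).
have hNR : 0 < INR n by apply: lt_0_INR; lia.
apply: Rmult_le_compat_r; first by left; apply: Rinv_0_lt_compat.
case: (Rle_lt_or_eq_dec _ _ hmono) => h.
- left; apply: ln_increasing => //.
- by rewrite h; right.
Qed.

Lemma p_big : plim (Cbig m) < 0.
Proof.
have [lr [lq [hC he]]] := Cbig_facts hm.
set C := Cbig m in hC he *.
suff : plim C <= - / 2 by lra.
apply: (cv_le (Hypp hC)).
case: (nat_above (- 2 * ln (rr m))) => n1 hn1.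
exists (n1 + 2)%nat => n hn.
have hNR : 0 < INR n by apply: lt_0_INR; lia.
have hNn : INR n1 <= INR n by apply: le_INR; lia.
have h2n : (2 <= n)%N by lia.
have h0n : (0 < n)%N by lia.
have hp := pSAT_pos (Mof C n) hm h2n.
have [a1 b1] := Mof_bounds n (Rlt_le _ _ hC).
have fm := @fm_real n (Mof C n) m 0 hm.
have hOm := Omega_pos (Mof C n) m h0n.
move: (Mof C n) hp a1 b1 fm hOm => M hp a1 b1 fm hOm.
have hO : 0 < INR #|Omega n M m| by apply: lt_0_INR; apply/ltP.
have [r0 r1] := rr_bounds hm; have hQ := Qr_ge1 hm.
have hle : pSAT n M m <= Qr m ^ n * rr m ^ M.
  rewrite /pSAT /probR; apply: div_le => //.
  eapply Rle_trans; last first.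
    eapply Rle_trans; first exact: fm.
    by right; simpl; ring.
  apply: le_INR; apply/leP; apply: subset_leq_card; apply/subsetP => w.
  by rewrite !inE addn0 => /eqP ->.
have hpos : 0 < Qr m ^ n * rr m ^ M by apply: Rmult_lt_0_compat; apply: pow_lt; lra.
have hln : ln (pSAT n M m) <= ln (Qr m ^ n * rr m ^ M).
  case: (Rle_lt_or_eq_dec _ _ hle) => h; [left; apply: ln_increasing | right; rewrite h] => //.
rewrite ln_mult in hln; try (apply: pow_lt; lra).
rewrite !ln_pow in hln; try lra.
rewrite ln_mult in he; try lra.
have hlnQ : ln (Qr m) >= 0 by rewrite -ln_1; case: (Rle_lt_or_eq_dec _ _ hQ) => h; [left; apply: ln_increasing | right; rewrite h] => //; lra.
apply: div_le => //.
have hk : INR M * ln (rr m) <= (C * INR n - 1) * ln (rr m) by nra.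
have := ln_lt_2. nra.
Qed.

End PPart.


Unset Implicit Arguments.
Set Strict Implicit.

Lemma threshold (f : R -> R) (C : R) :
  (forall c, 0 < c -> f c <= 0) ->
  (forall a b, 0 < a -> a < b -> f b <= f a) ->
  0 < C -> f C < 0 ->
  exists c0, forall c, 0 < c -> (c < c0 -> f c = 0) /\ (c0 < c -> f c < 0).
Proof.
move=> hle hmono hC hfC.
pose E := fun c => 0 < c /\ f c = 0.
have hb : forall c, E c -> c < C.
  move=> c [hc hf]; apply: Rnot_le_lt => hCc.
  case: (Rle_lt_or_eq_dec _ _ hCc) => h.
  - have := hmono _ _ hC h; lra.
  - subst; lra.
case: (classic (exists c, E c)) => hex.
- have bd : bound E by exists C => c hc; left; apply: hb.
  case: (completeness E bd hex) => c0 [hub hlub].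
  exists c0 => c hc; split.
  + move=> hlt.
    have : ~ is_upper_bound E c by move=> hu; have := hlub c hu; lra.
    move=> hnot.
    have [e [he hce]] : exists e, E e /\ c < e.
      apply: NNPP => hn; apply: hnot => x hx.
      apply: Rnot_lt_le => hxc; apply: hn; exists x; split => //.
    have [he0 hfe] := he.
    have := hmono _ _ hc hce; have := hle _ hc; lra.
  + move=> hlt.
    have := hle _ hc; case/Rle_lt_or_eq_dec => // hf.
    have := hub c (conj hc hf); lra.
- exists 0 => c hc; split; first lra.
  move=> _; have := hle _ hc; case/Rle_lt_or_eq_dec => // hf.
  exfalso; apply: hex; exists c; split => //.
Qed.

Theorem corollary1 (m : model) (Hlim plim : R -> R) :
  model_ok m ->
  (forall c : R, 0 < c -> forall eps : R, 0 < eps ->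
     Un_cv (fun N => probR N (Mof c N) m (dev_event N (Mof c N) m (Hlim c) eps)) 0) ->
  (forall c : R, 0 < c ->
     Un_cv (fun N => ln (pSAT N (Mof c N) m) / INR N) (plim c)) ->
  (exists cH : R, forall c : R, 0 < c ->
      (c < cH -> Hlim c = c) /\ (cH < c -> Hlim c < c)) /\
  (exists cp : R, forall c : R, 0 < c ->
      (c < cp -> plim c = 0) /\ (cp < c -> plim c < 0)).
Proof.
move=> hm HypH Hypp.
have [_ [_ [hC _]]] := Cbig_facts hm.
split.
- have [c0 hc0] := @threshold (fun c => Hlim c - c) (Cbig m)
    (fun c hc => ltac:(have := H_le_c HypH hc; lra))
    (fun a b ha hab => H_mono hm HypH ha hab) hC
    ltac:(have := H_big hm HypH; lra).
  exists c0 => c hc; have [h1 h2] := hc0 c hc; split => h.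
  + have := h1 h; lra.
  + have := h2 h; lra.
- have [c0 hc0] := @threshold plim (Cbig m)
    (fun c hc => p_le0 hm Hypp hc) (fun a b ha hab => p_mono hm Hypp ha hab) hC
    (p_big hm Hypp).
  by exists c0.
Qed.
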